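(* Let $s\in(0,1)$, $N>2s$, $1<p<\frac{N+2s}{N-2s}$, $0<a\in L^\infty(\mathbb R^N)$, and let $f\in H^{-s}(\mathbb R^N)$ be a nonnegative functional with $f\not\equiv0$. Let $C_p:=(p\|a\|_{L^\infty})^{-\frac1{p-1}}\frac{p-1}{p}$ and assume $$\inf_{u\in H^s(\mathbb R^N),\ \|u\|_{L^{p+1}(\mathbb R^N)}=1}\Big\{C_p\|u\|_{H^s}^{\frac{2p}{p-1}}-\langle f,u\rangle\Big\}>0.$$ Then $c_0<c_1$, where $c_0:=\inf_{U_1}I_{a,f}$ and $c_1:=\inf_U I_{a,f}$.
   Context: $\|u\|_{H^s}^2=\int_{\mathbb R^N}|u|^2+\iint_{\mathbb R^{2N}}\frac{|u(x)-u(y)|^2}{|x-y|^{N+2s}}dx\,dy$; $\langle\cdot,\cdot\rangle$ is the $H^{-s}$–$H^s$ duality; $f$ nonnegative means $\langle f,u\rangle\ge0$ for all nonnegative $u\in H^s$. $I_{a,f}(u)=\frac12\|u\|_{H^s}^2-\frac1{p+1}\int_{\mathbb R^N}a(x)u_+^{p+1}dx-\langle f,u\rangle$, $u_+=\max\{u,0\}$. With $g(u):=\|u\|_{H^s}^2-p\|a\|_{L^\infty}\|u\|_{L^{p+1}}^{p+1}$: $U_1:=\{u\in H^s: u=0\text{ or }g(u)>0\}$ and $U:=\{u\in H^s\setminus\{0\}: g(u)=0\}$. *)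

(* Defs.v *)
From HB Require Import structures.
From mathcomp Require Import all_boot all_order all_algebra.
From mathcomp Require Import all_classical all_reals all_analysis.
Set Implicit Arguments. Unset Strict Implicit. Unset Printing Implicit Defensive.
Import Order.TTheory GRing.Theory Num.Theory.
Import numFieldNormedType.Exports.
Local Open Scope classical_set_scope.
Local Open Scope ring_scope.

Section FracSobolev.
Context {R : realType} (N : nat).

Definition pt := N.-tuple R.

Definition box (a b : pt) : set pt :=
  [set x | forall i : 'I_N, tnth a i <= tnth x i < tnth b i].
Definition box_vol (a b : pt) : R := \prod_(i < N) (tnth b i - tnth a i).

(* N-dimensional Lebesgue (outer) measure: infimum of the total volume of
   countable covers by boxes. On measurable sets this is Lebesgue measure. *)
Definition lebN (A : set pt) : \bar R :=
  ereal_inf [set z : \bar R | exists a b : nat -> pt,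
    [/\ (forall k (i : 'I_N), tnth (a k) i <= tnth (b k) i),
        A `<=` \bigcup_k box (a k) (b k) &
        z = (\sum_(k <oo) (box_vol (a k) (b k))%:E)%E]].

Definition edist (x y : pt) : R :=
  Num.sqrt (\sum_(i < N) (tnth x i - tnth y i) ^+ 2).

Variable s : R.

Definition Hs_norm2e (u : pt -> R) : \bar R :=
  ((\int[lebN]_x ((u x) ^+ 2)%:E) +
   (\int[lebN]_x \int[lebN]_y
      (((u x - u y) ^+ 2) / (edist x y `^ (N%:R + 2 * s)))%:E))%E.

Definition in_Hs (u : pt -> R) : Prop :=
  measurable_fun setT u /\ (Hs_norm2e u < +oo)%E.

Definition Hs_norm2 (u : pt -> R) : R := fine (Hs_norm2e u).

Definition Lq_pow (q : R) (u : pt -> R) : R :=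
  fine (\int[lebN]_x ((`|u x| `^ q))%:E)%E.

Definition ess_supN (a : pt -> R) : \bar R :=
  ereal_inf [set y : \bar R | exists A, [/\ measurable A, lebN A = 0%E &
     [set x | (y < (a x)%:E)%E] `<=` A]].

Definition Linfty_norm (a : pt -> R) : R := fine (ess_supN a).

(* f in H^{-s}: a bounded linear functional on H^s; <f,u> = f u *)
Definition in_Hminus_s (f : (pt -> R) -> R) : Prop :=
  [/\ (forall u v, in_Hs u -> in_Hs v -> f (u \+ v) = f u + f v),
      (forall (c : R) u, in_Hs u -> f (fun x => c * u x) = c * f u) &
      exists C : R, forall u, in_Hs u -> `|f u| <= C * Num.sqrt (Hs_norm2 u)].

Definition nonneg_functional (f : (pt -> R) -> R) : Prop :=
  forall u, in_Hs u -> (forall x, 0 <= u x) -> 0 <= f u.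

Variables (p : R) (a : pt -> R) (f : (pt -> R) -> R).

Definition I_af (u : pt -> R) : R :=
  2^-1 * Hs_norm2 u
  - (p + 1)^-1 * fine (\int[lebN]_x (a x * (Num.max (u x) 0) `^ (p + 1))%:E)%E
  - f u.

Definition g_fun (u : pt -> R) : R :=
  Hs_norm2 u - p * Linfty_norm a * Lq_pow (p + 1) u.

(* u = 0 in H^s means ||u||_{H^s} = 0 *)
Definition U1 : set (pt -> R) :=
  [set u | in_Hs u /\ (Hs_norm2 u = 0 \/ 0 < g_fun u)].
Definition U0 : set (pt -> R) :=
  [set u | [/\ in_Hs u, Hs_norm2 u != 0 & g_fun u = 0]].

Definition c0 : \bar R := ereal_inf [set (I_af u)%:E | u in U1].
Definition c1 : \bar R := ereal_inf [set (I_af u)%:E | u in U0].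

Definition Cp : R :=
  (p * Linfty_norm a) `^ (- (p - 1)^-1) * ((p - 1) / p).

Definition hyp_inf : \bar R :=
  ereal_inf [set (Cp * (Hs_norm2 u) `^ (p / (p - 1)) - f u)%:E
            | u in [set u | in_Hs u /\ Lq_pow (p + 1) u = 1]].

End FracSobolev.

(* Main.v *)
Require Import Defs.
From HB Require Import structures.
From mathcomp Require Import all_boot all_order all_algebra.
From mathcomp Require Import all_classical all_reals all_analysis.
Import Order.TTheory GRing.Theory Num.Theory.
Import numFieldNormedType.Exports.
Local Open Scope classical_set_scope.
Local Open Scope ring_scope.
Section GenInt.
Local Open Scope ereal_scope.
Context d (T : measurableType d) (R : realType) (mu : set T -> \bar R).
Hypothesis mu_ge0 : forall A, 0 <= mu A.
Hypothesis mu0 : mu set0 = 0.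
Import HBNNSimple.

Definition NN (f : T -> \bar R) := ereal_sup [set sintegral mu h |
  h in [set h : {nnsfun T >-> R} | forall x, (h x)%:E <= f x]].

Lemma sint_term_ge0 (h : {nnsfun T >-> R}) x : 0 <= x%:E * mu (h @^-1` [set x]).
Proof.
have [x0|x0] := leP 0%R x; first by rewrite mule_ge0.
rewrite (_ : _ @^-1` _ = set0) ?mu0 ?mule0//.
by apply/seteqP; split => // t /= htx; move: x0; rewrite -htx ltNge fun_ge0.
Qed.

Lemma sint_ge0 (h : {nnsfun T >-> R}) : 0 <= sintegral mu h.
Proof. by rewrite sintegralET; apply: fsume_ge0 => x _; exact: sint_term_ge0. Qed.

Lemma sint_cst0 : sintegral mu (cst 0%R) = 0.
Proof.
rewrite sintegralET fsbig1// => r _; rewrite preimage_cst.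
by case: ifPn => [/[!inE] <-|]; rewrite ?mul0e// mu0 mule0.
Qed.

Lemma NN_ge0 f : (forall x, 0 <= f x) -> 0 <= NN f.
Proof.
move=> f0.
have H : [set sintegral mu h | h in [set h : {nnsfun T >-> R} | forall x, (h x)%:E <= f x]]
   (sintegral mu (@nnsfun0 _ T R)).
  by exists nnsfun0 => //= x; exact: f0.
apply: le_trans (ereal_sup_ubound H).
by rewrite (eq_sintegral (cst 0%R)) ?sint_cst0.
Qed.

Lemma NN_le f g : (forall x, f x <= g x) -> NN f <= NN g.
Proof.
move=> fg; apply: ge_ereal_sup => _ [h /= hf <-]; apply: ereal_sup_ubound.
by exists h => //= x; exact: le_trans (hf x) (fg x).
Qed.

Lemma intE f : (forall x, 0 <= f x) -> \int[mu]_(x in setT) f x = NN f.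
Proof.
move=> f0; rewrite /integral patch_setT.
have -> : f^\+ = f by apply/funext => x; rewrite funeposE max_l.
have -> : f^\- = cst 0.
  by apply/funext => x; rewrite funenegE /= max_r// oppe_le0.
rewrite [X in _ - X](_ : _ = 0) ?sube0//.
apply/eqP; rewrite eq_le; apply/andP; split; last first.
  exact: (@NN_ge0 (cst 0) (fun=> lexx 0)).
apply: ge_ereal_sup => _ [h /= h0 <-].
rewrite (eq_sintegral (cst 0%R)) ?sint_cst0// => x /=.
by apply/eqP; rewrite eq_le fun_ge0 andbT -lee_fin; exact: h0.
Qed.

Lemma int_ge0 f : (forall x, 0 <= f x) -> 0 <= \int[mu]_(x in setT) f x.
Proof. by move=> f0; rewrite intE//; exact: NN_ge0. Qed.

Lemma int_le f g : (forall x, 0 <= f x) -> (forall x, f x <= g x) ->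
  \int[mu]_(x in setT) f x <= \int[mu]_(x in setT) g x.
Proof.
move=> f0 fg; rewrite !intE//; first exact: NN_le.
by move=> x; exact: le_trans (f0 x) (fg x).
Qed.

Lemma sintM (k : R) (h : {nnsfun T >-> R}) : (0 < k)%R ->
  sintegral mu (cst k \* h)%R = k%:E * sintegral mu h.
Proof.
move=> k0; rewrite !sintegralET ge0_mule_fsumr; last exact: sint_term_ge0.
rewrite (reindex_fsbigT ( *%R k))/=; last first.
  by exists ( *%R k^-1); [apply: mulKf; rewrite gt_eqF|apply: mulVKf; rewrite gt_eqF].
apply: eq_fsbigr => x _.
by rewrite preimage_cstM ?gt_eqF// [(_ / k)%R]mulrC mulKf ?gt_eqF// EFinM muleA.
Qed.

Lemma NN_scale (k : R) f : (0 < k)%R -> NN (fun x => k%:E * f x) = k%:E * NN f.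
Proof.
move=> k0; apply/eqP; rewrite eq_le; apply/andP; split.
- apply: ge_ereal_sup => _ [h /= hf <-].
  have k'0 : (0 <= k^-1)%R by rewrite invr_ge0 ltW.
  pose h' := scale_nnsfun h k'0.
  have -> : sintegral mu h = k%:E * sintegral mu h'.
    rewrite -sintM//; apply: eq_sintegral => x /=.
    by rewrite mulrA mulfV ?gt_eqF// mul1r.
  apply: lee_wpmul2l; first by rewrite lee_fin ltW.
  apply: ereal_sup_ubound; exists h' => //= x.
  by rewrite EFinM lee_pdivrMl.
- have H : NN f <= k^-1%:E * NN (fun x => k%:E * f x).
    apply: ge_ereal_sup => _ [h /= hf <-].
    pose h' := scale_nnsfun h (ltW k0).
    have H1 : sintegral mu h' <= NN (fun x => k%:E * f x).
      apply: ereal_sup_ubound; exists h' => //= x.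
      by rewrite EFinM; apply: lee_wpmul2l => //; rewrite lee_fin ltW.
    by rewrite lee_pdivlMl// -sintM.
  by rewrite -lee_pdivlMl.
Qed.

Lemma int_scale (k : R) f : (0 < k)%R -> (forall x, 0 <= f x) ->
  \int[mu]_(x in setT) (k%:E * f x) = k%:E * \int[mu]_(x in setT) f x.
Proof.
move=> k0 f0; rewrite !intE// ?NN_scale// => x.
by rewrite mule_ge0// lee_fin ltW.
Qed.

Lemma NN_ae (A : set T) (mA : measurable A) f g :
  (forall B, mu B <= mu (B `\` A)) -> (forall x, 0 <= g x) ->
  (forall x, ~ A x -> f x <= g x) -> NN f <= NN g.
Proof.
move=> muA g0 fg; apply: ge_ereal_sup => _ [h /= hf <-].
pose h' := proj_nnsfun h (measurableC mA).
have h'E x : h' x = (if x \in A then 0 else h x)%R.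
  rewrite /h' /= /measurable_realfun.mindic indicE; case: (pselect (A x)) => Ax.
    by rewrite (mem_set Ax) memNset ?mulr0//= => /(_ Ax).
  by rewrite (memNset Ax) mem_set ?mulr1.
apply: (@le_trans _ _ (sintegral mu h')); last first.
  apply: ereal_sup_ubound; exists h' => // x.
  have -> : (h' x)%:E = (if x \in A then 0 else h x)%R%:E by congr EFin; exact: h'E.
  case: ifPn => xA; first exact: g0.
  by apply: le_trans (hf x) (fg x _) => /mem_set; apply/negP.
have E1 : sintegral mu h = \sum_(x \in range h) x%:E * mu (h @^-1` [set x]).
  rewrite sintegralET (fsbig_widen (range h) setT)// => x [_ /= Nx].
  rewrite (_ : _ @^-1` _ = set0) ?mu0 ?mule0//.
  by apply/seteqP; split => // t /= htx; apply: Nx; exists t.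
have E2 : sintegral mu h' = \sum_(x \in range h) x%:E * mu (h @^-1` [set x] `\` A).
  rewrite sintegralET (fsbig_widen (range h) setT)//; last first.
    move=> x [_ /= Nx].
    rewrite (_ : _ `\` _ = set0) ?mu0 ?mule0//.
    by apply/seteqP; split => // t /= [htx _]; apply: Nx; exists t.
  apply: eq_fsbigr => x _.
  have [->|x0] := eqVneq x 0%R; first by rewrite !mul0e.
  congr (_ * mu _); apply/seteqP; split => t /=.
    move=> htx; have {htx} : (if t \in A then 0 else h t)%R = x.
      by rewrite -htx; symmetry; exact: h'E.
    case: ifPn => tA; first by move=> /esym/eqP; rewrite (negPf x0).
    by move=> ->; split => // At; move: tA; rewrite (mem_set At).
  move=> [htx tA]; transitivity (if t \in A then 0 else h t)%R; first exact: h'E.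
  rewrite ifN// ; apply/negP => /set_mem; exact: tA.
rewrite E1 E2; apply: lee_fsum; first exact: fimfunP.
move=> x [t _ <-]; apply: lee_wpmul2l; last exact: muA.
by rewrite lee_fin fun_ge0.
Qed.

Lemma int_ae (A : set T) (mA : measurable A) f g :
  (forall B, mu B <= mu (B `\` A)) -> (forall x, 0 <= f x) -> (forall x, 0 <= g x) ->
  (forall x, ~ A x -> f x <= g x) ->
  \int[mu]_(x in setT) f x <= \int[mu]_(x in setT) g x.
Proof. by move=> muA f0 g0 fg; rewrite !intE//; exact: NN_ae fg. Qed.

End GenInt.
Section Leb.
Local Open Scope ereal_scope.
Context (R : realType) (N : nat).
Hypothesis N0 : (0 < N)%N.

Lemma box_vol_ge0 (a b : @pt R N) : (forall i, tnth a i <= tnth b i)%R ->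
  (0 <= box_vol a b)%R.
Proof. by move=> ab; apply: prodr_ge0 => i _; rewrite subr_ge0. Qed.

Lemma lebN_ge0 A : 0 <= @lebN R N A.
Proof.
apply: le_ereal_inf_tmp => _ [a [b [ab _ ->]]].
by apply: nneseries_ge0 => k _ _; rewrite lee_fin box_vol_ge0.
Qed.

Lemma lebN0 : @lebN R N set0 = 0.
Proof.
apply/eqP; rewrite eq_le lebN_ge0 andbT.
pose a0 : @pt R N := [tuple 0%R | i < N].
apply: (@le_trans _ _ (\sum_(k <oo) (box_vol a0 a0)%:E)).
  apply: ereal_inf_lbound; exists (fun=> a0), (fun=> a0); split => //.
rewrite eseries0// => i _ _; rewrite /box_vol (eq_bigr (fun=> 0%R)) => [|j _]; last by rewrite subrr.
by rewrite prodr_const card_ord expr0n gtn_eqF.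
Qed.

Lemma series_interleave (al be : nat -> \bar R) :
  (forall k, 0 <= al k) -> (forall k, 0 <= be k) ->
  \sum_(k <oo) (if odd k then be k./2 else al k./2) <=
  \sum_(k <oo) al k + \sum_(k <oo) be k.
Proof.
move=> al0 be0; pose c k := if odd k then be k./2 else al k./2.
change (\sum_(k <oo) c k <= \sum_(k <oo) al k + \sum_(k <oo) be k).
have c0 k : 0 <= c k by rewrite /c; case: ifP.
rewrite -nneseriesD//.
move: (ereal_nondecreasing_series (fun n _ _ => c0 n) (P := xpredT) (N := 0%N)).
move=> /ereal_nondecreasing_cvgn/cvg_lim -> //.
apply: ge_ereal_sup => _ [n _ <-] /=.
have E m : \sum_(0 <= k < m.*2) c k = \sum_(0 <= j < m) (al j + be j).
  elim: m => [|m IH]; first by rewrite !big_geq.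
  rewrite doubleS !big_nat_recr //= IH -addeA; congr (_ + _).
  have h1 : (m.*2.+1)./2 = m by exact: (half_bit_double m true).
  have h2 : (m.*2)./2 = m by exact: doubleK.
  by rewrite /c /= odd_double /= h2 -[uphalf _]/((m.*2.+1)./2) h1.
apply: (@le_trans _ _ (\sum_(0 <= k < n.*2) c k)).
  apply: (ereal_nondecreasing_series (fun n _ _ => c0 n) (P := xpredT) (N := 0%N)).
  by rewrite -addnn leq_addr.
rewrite E; apply: nneseries_lim_ge => j _ _; exact: adde_ge0.
Qed.

Lemma lebN_null (A : set (@pt R N)) : @lebN R N A = 0 ->
  forall B, @lebN R N B <= @lebN R N (B `\` A).
Proof.
move=> A0 B; apply: le_ereal_inf_tmp => _ [a1 [b1 [ab1 cov1 ->]]].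
apply/lee_addgt0Pr => e e0.
have : @lebN R N A < e%:E by rewrite A0 lte_fin.
case/ereal_inf_lt => _ [a2 [b2 [ab2 cov2 ->]]] lt2.
pose a k := if odd k then a2 k./2 else a1 k./2.
pose b k := if odd k then b2 k./2 else b1 k./2.
apply: (@le_trans _ _ (\sum_(k <oo) (box_vol (a k) (b k))%:E)).
  apply: ereal_inf_lbound; exists a, b; split => //.
    by move=> k i; rewrite /a /b; case: ifP.
  move=> x Bx; have [Ax|nAx] := pselect (A x).
    have [j _ hj] := cov2 x Ax.
    exists j.*2.+1 => //; rewrite /a /b /= odd_double /=.
    by rewrite -[uphalf _]/((j.*2.+1)./2) (half_bit_double j true).
  have [j _ hj] := cov1 x (conj Bx nAx).
  exists j.*2 => //; rewrite /a /b /= odd_double /=.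
  by rewrite doubleK.
apply: le_trans (leeD (lexx _) (ltW lt2)).
rewrite (@eq_eseriesr _ _ (fun k => if odd k then (box_vol (a2 k./2) (b2 k./2))%:E
   else (box_vol (a1 k./2) (b1 k./2))%:E)); last first.
  by move=> k _; rewrite /a /b; case: ifP.
apply: series_interleave => k; rewrite lee_fin box_vol_ge0//.
Qed.

End Leb.

Lemma fineZ (R : realType) (k : R) (X : \bar R) : (0 < k)%R -> fine (k%:E * X)%E = k * fine X.
Proof.
move=> k0; case: X => [r| |] /=; first by [].
  by rewrite muleC gt0_mulye ?lte_fin// mulr0.
by rewrite muleC gt0_mulNye ?lte_fin// mulr0.
Qed.

Lemma max_pM (R : realType) (c y : R) : 0 < c -> Num.max (c * y) 0 = c * Num.max y 0.
Proof.
move=> c0; have [y0|y0] := leP y 0.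
  by rewrite !max_r ?mulr0// pmulr_rle0.
by rewrite !max_l ?ltW// pmulr_rgt0.
Qed.

Section Func.
Context (R : realType) (N : nat).
Hypothesis N0 : (0 < N)%N.
Local Notation mu := (@lebN R N).
Local Notation pt := (@pt R N).

Let mu_ge0 := @lebN_ge0 R N.
Let mu0 := @lebN0 R N N0.

Lemma hs_inner_ge0 s (u : pt -> R) x y :
  (0 <= ((u x - u y) ^+ 2) / (Defs.edist x y `^ (N%:R + 2 * s)))%R.
Proof. by rewrite divr_ge0 ?sqr_ge0 ?powR_ge0. Qed.

Lemma hs_ge0 s (u : pt -> R) : (0 <= Hs_norm2e s u)%E.
Proof.
rewrite /Hs_norm2e adde_ge0//; apply: int_ge0 => // x.
  by rewrite lee_fin sqr_ge0.
by apply: int_ge0 => // y; rewrite lee_fin hs_inner_ge0.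
Qed.

Lemma Q_ge0 s (u : pt -> R) : 0 <= Hs_norm2 s u.
Proof. by rewrite /Hs_norm2 fine_ge0 ?hs_ge0. Qed.

Lemma hs_scale s (u : pt -> R) c : c != 0 ->
  Hs_norm2e s (fun x => c * u x) = ((c ^+ 2)%:E * Hs_norm2e s u)%E.
Proof.
move=> c0; have c20 : 0 < c ^+ 2 by rewrite lt_def sqrf_eq0 c0 sqr_ge0.
rewrite /Hs_norm2e ge0_muleDr; last 2 first.
- by apply: int_ge0 => // x; rewrite lee_fin sqr_ge0.
- apply: int_ge0 => // x; apply: int_ge0 => // y; by rewrite lee_fin hs_inner_ge0.
congr (_ + _)%E.
  rewrite -int_scale//; last by move=> x; rewrite lee_fin sqr_ge0.
  by congr integral; apply/funext => x; rewrite exprMn EFinM.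
rewrite -int_scale//; last first.
  by move=> x; apply: int_ge0 => // y; rewrite lee_fin hs_inner_ge0.
congr integral; apply/funext => x.
rewrite -int_scale//; last by move=> y; rewrite lee_fin hs_inner_ge0.
congr integral; apply/funext => y.
by rewrite -mulrBr exprMn -mulrA EFinM.
Qed.

Lemma inHs_scale s (u : pt -> R) c : c != 0 -> in_Hs s u -> in_Hs s (fun x => c * u x).
Proof.
move=> c0 [mu_ hu]; split.
  by apply: measurable_realfun.measurable_funM => //; exact: measurable_cst.
rewrite hs_scale//; have := hs_ge0 s u.
move: hu; case: (Hs_norm2e s u) => // r _ _.
by rewrite -EFinM ltry.
Qed.

Lemma Q_scale s (u : pt -> R) c : c != 0 ->
  Hs_norm2 s (fun x => c * u x) = c ^+ 2 * Hs_norm2 s u.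
Proof.
move=> c0; rewrite /Hs_norm2 hs_scale// fineZ//.
by rewrite lt_def sqrf_eq0 c0 sqr_ge0.
Qed.

Lemma P_ge0 q (u : pt -> R) : 0 <= Lq_pow q u.
Proof. by rewrite /Lq_pow fine_ge0// int_ge0// => x; rewrite lee_fin powR_ge0. Qed.

Lemma P_scale q (u : pt -> R) c : c != 0 ->
  Lq_pow q (fun x => c * u x) = `|c| `^ q * Lq_pow q u.
Proof.
move=> c0; rewrite /Lq_pow -fineZ ?powR_gt0 ?normr_gt0//.
rewrite -int_scale ?powR_gt0 ?normr_gt0//; try by move=> x; rewrite lee_fin powR_ge0.
by do 2 f_equal; apply/funext => x; rewrite normrM powRM// EFinM.
Qed.

Definition Jf (p : R) (a : pt -> R) (u : pt -> R) : R :=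
  fine (\int[mu]_x (a x * (Num.max (u x) 0) `^ (p + 1))%:E)%E.

Lemma J_ge0 p (a : pt -> R) u : (forall x, 0 <= a x) -> 0 <= Jf p a u.
Proof.
move=> a0; rewrite /Jf fine_ge0// int_ge0// => x.
by rewrite lee_fin mulr_ge0 ?powR_ge0.
Qed.

Lemma J_scale p (a : pt -> R) u c : (forall x, 0 <= a x) -> 0 < c ->
  Jf p a (fun x => c * u x) = c `^ (p + 1) * Jf p a u.
Proof.
move=> a0 c0; rewrite /Jf -fineZ ?powR_gt0//.
rewrite -int_scale ?powR_gt0//; try by move=> x; rewrite lee_fin mulr_ge0 ?powR_ge0.
do 2 f_equal; apply/funext => x.
by rewrite max_pM// powRM ?(ltW c0) ?le_max ?lexx ?orbT// -EFinM mulrCA.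
Qed.

Lemma I_afE s p a f (u : pt -> R) :
  I_af s p a f u = 2^-1 * Hs_norm2 s u - (p + 1)^-1 * Jf p a u - f u.
Proof. by []. Qed.

Lemma g_funE s p a (u : pt -> R) :
  g_fun s p a u = Hs_norm2 s u - p * Linfty_norm a * Lq_pow (p + 1) u.
Proof. by []. Qed.

End Func.
Arguments Jf {R N}.

Section Ess.
Context (R : realType) (N : nat).
Hypothesis N0 : (0 < N)%N.
Local Notation mu := (@lebN R N).
Local Notation pt := (@pt R N).

Lemma max0_le_norm (r : R) : Num.max r 0 <= `|r|.
Proof. by rewrite /Num.max; case: ifP => _; [exact: normr_ge0|exact: ler_norm]. Qed.

Lemma J_le p (a : pt -> R) (u : pt -> R) (L : R) : 0 < p + 1 ->
  (forall x, 0 <= a x) -> ess_supN a = L%:E -> 0 < L ->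
  0 < Lq_pow (p + 1) u -> Jf p a u <= L * Lq_pow (p + 1) u.
Proof.
move=> p0 a0 esL L0 P0.
set P := Lq_pow (p + 1) u.
set Ie := (\int[mu]_x ((`|u x| `^ (p + 1))%:E))%E.
have Ie0 : (0 <= Ie)%E by apply: (@int_ge0 _ _ _ mu (lebN0 R N N0)) => x; rewrite lee_fin powR_ge0.
have IeE : Ie = P%:E.
  move: P0; rewrite /P /Lq_pow -/Ie; move: Ie0.
  by case: Ie => // _; rewrite ltxx.
have key y : L < y -> Jf p a u <= y * P.
  move=> Ly; have y0 : 0 < y by exact: lt_trans Ly.
  have : (ess_supN a < y%:E)%E by rewrite esL lte_fin.
  case/ereal_inf_lt => z [A [mA A0 sA]] zy.
  set Ji := (\int[mu]_x ((a x * Num.max (u x) 0 `^ (p + 1))%:E))%E.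
  have Ji0 : (0 <= Ji)%E.
    by apply: (@int_ge0 _ _ _ mu (lebN0 R N N0)) => x; rewrite lee_fin mulr_ge0 ?powR_ge0.
  have JiP : (Ji <= (y * P)%:E)%E.
    rewrite EFinM -IeE -(@int_scale _ _ _ mu (@lebN_ge0 R N) (lebN0 R N N0))//; try by move=> x; rewrite lee_fin powR_ge0.
    apply: (@int_ae _ _ _ mu (lebN0 R N N0) A mA).
    - exact: (@lebN_null R N A).
    - by move=> x; rewrite lee_fin mulr_ge0 ?powR_ge0.
    - by move=> x; rewrite mule_ge0 ?lee_fin ?powR_ge0 ?ltW.
    move=> x nAx; rewrite -EFinM lee_fin.
    have axy : a x <= y.
      rewrite leNgt; apply/negP => yax; apply: nAx; apply: sA => /=.
      by apply: lt_trans zy _; rewrite lte_fin.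
    apply: ler_pM => //; first by rewrite powR_ge0.
    apply: ge0_ler_powR; [exact: ltW | by rewrite nnegrE le_max lexx orbT |
      by rewrite nnegrE normr_ge0 | exact: max0_le_norm].
  have Jifin : Ji \is a fin_num.
    by rewrite ge0_fin_numE// (le_lt_trans JiP)// ltry.
  by rewrite /Jf -/Ji -lee_fin fineK.
apply/ler_addgt0Pr => e e0.
have Pe : 0 < e / P by rewrite divr_gt0.
have := key (L + e / P); rewrite ltrDl Pe => /(_ isT) H; apply: le_trans H _.
by rewrite mulrDl divfK // gt_eqF.
Qed.

End Ess.

From mathcomp Require Import ring lra.

Section RA.
Variable R : realType.

Lemma gap_core (s Q W Z F : R) :
  0 < s -> s * 6 < 1 -> 0 < Q -> 0 <= W -> W <= Q -> 0 <= Z ->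
  Z * (1 - s) <= s * W -> F <= Q - W - s * 6 * Q ->
  s * (s * 6 * Q) / 2 <= (1 - (1 - s) ^+ 2) * Q / 2 - Z - s * F.
Proof.
move=> s0 s6 Q0 W0 WQ Z0 ZW FW.
have Z1 : Z <= s * W + s * Z by nra.
have Z2 : Z * 5 <= s * W * 6 by nra.
have Z3 : Z <= s * W + s * s * W * 2 by nra.
have F1 : s * F <= s * (Q - W - s * 6 * Q) by nra.
nra.
Qed.

Lemma bern (tau q : R) : 0 < tau -> 0 <= q ->
  (1 - tau `^ q) * tau <= q * (1 - tau).
Proof.
move=> t0 q0.
have lnt : - ln tau * tau <= 1 - tau.
  have h := @le_ln1Dx R (tau^-1 - 1).
  have ti : 0 < tau^-1 by rewrite invr_gt0.
  have : -1 < tau^-1 - 1 by lra.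
  move/h; rewrite (_ : 1 + (tau^-1 - 1) = tau^-1); last by ring.
  rewrite lnV ?posrE //.
  move=> H; have := ler_wpM2r (ltW t0) H.
  by rewrite mulrBl mulVf ?gt_eqF // mul1r.
have ex : 1 + q * ln tau <= tau `^ q.
  by rewrite /powR gt_eqF // expR_ge1Dx.
have : (1 - tau `^ q) * tau <= (- q * ln tau) * tau.
  by apply: ler_wpM2r; [exact: ltW | lra].
move=> H; apply: le_trans H _.
rewrite (_ : - q * ln tau * tau = q * (- ln tau * tau)); last by ring.
exact: ler_wpM2l.
Qed.

Lemma powRK' (x r : R) : 0 <= x -> r != 0 -> (x `^ r^-1) `^ r = x.
Proof. by move=> x0 r0; rewrite -powRrM mulVf // powRr1. Qed.

Lemma powR2 (t : R) : 0 <= t -> t `^ 2 = t ^+ 2.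
Proof. by move=> t0; rewrite -[2]/(2%:R) powR_mulrn. Qed.

Lemma powR_split (t p : R) : 0 < t -> t `^ (p + 1) = t `^ (p - 1) * t ^+ 2.
Proof.
move=> t0; rewrite -powR2 ?ltW // -powRD; last by apply/implyP => _; rewrite gt_eqF.
by congr (_ `^ _); lra.
Qed.

Lemma powR_S (t p : R) : 0 < t -> t `^ (p + 1) = t `^ p * t.
Proof.
move=> t0; rewrite powRD ?powRr1 ?ltW //; by apply/implyP => _; rewrite gt_eqF.
Qed.

Lemma compCp (A t p : R) : 0 < A -> 0 < t -> 1 < p ->
  t * ((A `^ (- (p - 1)^-1) * ((p - 1) / p)) *
       (t^-1 ^+ 2 * (A * t `^ (p + 1))) `^ (p / (p - 1)))
  = (p - 1) / p * (A * t `^ (p + 1)).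
Proof.
move=> A0 t0 p1.
have p10 : p - 1 != 0 by rewrite subr_eq0 gt_eqF.
have e1 : t^-1 ^+ 2 * (A * t `^ (p + 1)) = A * t `^ (p - 1).
  by rewrite powR_split //; field; rewrite gt_eqF.
rewrite e1 powRM ?(ltW A0) ?powR_ge0 // -powRrM.
rewrite (_ : (p - 1) * (p / (p - 1)) = p); last by rewrite mulrC divfK.
have e2 : A `^ (- (p - 1)^-1) * A `^ (p / (p - 1)) = A.
  rewrite -powRD; last by apply/implyP => _; rewrite gt_eqF.
  rewrite (_ : - (p - 1)^-1 + p / (p - 1) = 1) ?powRr1 ?(ltW A0) //.
  by field.
rewrite powR_S //.
have : A `^ (- (p - 1)^-1) * ((p - 1) / p) * (A `^ (p / (p - 1)) * t `^ p) =
       (A `^ (- (p - 1)^-1) * A `^ (p / (p - 1))) * ((p - 1) / p) * t `^ p by ring.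
by move=> ->; rewrite e2; ring.
Qed.

Lemma pow_m1_le (t p : R) : 0 < t -> 1 < p -> t `^ (p - 1) <= 1 + t `^ (p + 1).
Proof.
move=> t0 p1; have [t1|t1] := leP t 1.
  apply: le_trans (_ : 1 <= _); last by rewrite lerDl powR_ge0.
  have h : t `^ (p - 1) <= 1 `^ (p - 1).
    by apply: ge0_ler_powR; rewrite ?nnegrE; lra.
  by move: h; rewrite powR1.
apply: le_trans (_ : t `^ (p + 1) <= _); last by rewrite lerDr.
by apply: ler_powR; [exact: ltW | lra].
Qed.

End RA.

Arguments hs_ge0 {R N} N0 s u.
Arguments Q_ge0 {R N} N0 s u.
Arguments hs_scale {R N} N0 s u c _.
Arguments inHs_scale {R N} N0 s u c _ _.
Arguments Q_scale {R N} N0 s u c _.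
Arguments P_ge0 {R N} N0 q u.
Arguments P_scale {R N} N0 q u c _.
Arguments J_ge0 {R N} N0 p a u _.
Arguments J_scale {R N} N0 p a u c _ _.
Arguments I_afE {R N} s p a f u.
Arguments g_funE {R N} s p a u.
Arguments J_le {R N} N0 p a u L _ _ _ _ _.
Arguments gap_core {R} s Q W Z F.
Arguments bern {R} tau q.
Arguments powRK' {R} x r.
Arguments powR_split {R} t p.
Arguments compCp {R} A t p.
Arguments pow_m1_le {R} t p.

Section RA2.
Variable R : realType.
Lemma branch_real (p Q J F t dl A Qm X K : R) :
  1 < p -> 0 < Q -> 0 <= J -> J * p <= Q -> 0 < t -> 0 < dl -> 0 < A ->
  t * dl < Q -> F <= (p - 1) / p * Q - t * dl ->
  (1 - X) * (1 - t * dl / (6 * Q)) <= (p + 1) * (t * dl / (6 * Q)) ->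
  X <= 1 -> Q = A * K * t ^+ 2 -> K <= 1 + Qm / A -> 0 <= Qm -> 0 < K ->
  dl ^+ 2 / (12 * A * (1 + Qm / A)) <=
  (2^-1 * Q - (p + 1)^-1 * J - F) -
  (2^-1 * ((1 - t * dl / (6 * Q)) ^+ 2 * Q) - (p + 1)^-1 * (X * J) -
   (1 - t * dl / (6 * Q)) * F).
Proof.
move=> p1 Q0 J0 JQ t0 dl0 A0 tQ Fb brn X1 QK Kb Qm0 K0.
set sg := t * dl / (6 * Q) in brn *.
have sgE : sg * 6 * Q = t * dl by rewrite /sg; field; rewrite gt_eqF.
have sg0 : 0 < sg by rewrite /sg divr_gt0 ?mulr_gt0 //.
have sg6 : sg * 6 < 1.
  have : sg * 6 * Q < 1 * Q by rewrite sgE mul1r.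
  by rewrite ltr_pM2r.
have pp : 0 < p + 1 by lra.
pose W := p^-1 * Q.
have p0 : 0 < p by lra.
have pi0 : 0 < p^-1 by rewrite invr_gt0.
have W0 : 0 <= W by rewrite /W mulr_ge0 // ltW.
have WQ : W <= Q.
  rewrite /W -[X in _ <= X]mul1r ler_wpM2r ?(ltW Q0) // invf_le1 //; lra.
pose Z := (p + 1)^-1 * ((1 - X) * J).
have ppi : 0 < (p + 1)^-1 by rewrite invr_gt0.
have Z0 : 0 <= Z by rewrite /Z mulr_ge0 ?mulr_ge0 ?(ltW ppi) // subr_ge0.
have JW : J <= W.
  rewrite /W -(ler_pM2l p0) mulrA mulfV ?gt_eqF // mul1r mulrC //.
have ZW : Z * (1 - sg) <= sg * W.
  have : (1 - X) * (1 - sg) * J <= (p + 1) * sg * J by rewrite ler_wpM2r.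
  rewrite /Z => H.
  have -> : (p + 1)^-1 * ((1 - X) * J) * (1 - sg) = (p + 1)^-1 * ((1 - X) * (1 - sg) * J) by ring.
  apply: le_trans (_ : (p + 1)^-1 * ((p + 1) * sg * J) <= _).
    by apply: ler_wpM2l => //; rewrite ltW.
  rewrite (_ : (p + 1)^-1 * ((p + 1) * sg * J) = sg * J); last by field; rewrite gt_eqF.
  by apply: ler_wpM2l => //; rewrite ltW.
have FW : F <= Q - W - sg * 6 * Q.
  by rewrite sgE (_ : Q - W = (p - 1) / p * Q) // /W; field; rewrite gt_eqF.
have gc := gap_core sg Q W Z F sg0 sg6 Q0 W0 WQ Z0 ZW FW.
have -> : 2^-1 * Q - (p + 1)^-1 * J - F -
  (2^-1 * ((1 - sg) ^+ 2 * Q) - (p + 1)^-1 * (X * J) - (1 - sg) * F) =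
  (1 - (1 - sg) ^+ 2) * Q / 2 - Z - sg * F by rewrite /Z; ring.
apply: le_trans gc.
rewrite sgE.
have -> : sg * (t * dl) / 2 = dl ^+ 2 / (12 * A * K).
  by rewrite /sg QK; field; rewrite !gt_eqF.
have h12 : 0 < 12 * A by rewrite mulr_gt0.
have qa : 0 <= Qm / A by rewrite divr_ge0 // ltW.
apply: ler_wpM2l; first exact: sqr_ge0.
rewrite lef_pV2 ?posrE; first by apply: ler_wpM2l => //; exact: ltW.
all: apply: mulr_gt0 => //; lra.
Qed.
End RA2.
Arguments branch_real {R} p Q J F t dl A Qm X K.


Theorem lemma3p2 (R : realType) (N : nat) (s p : R)
  (a : N.-tuple R -> R) (f : (N.-tuple R -> R) -> R) :
  0 < s -> s < 1 -> 2 * s < N%:R ->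
  1 < p -> p < (N%:R + 2 * s) / (N%:R - 2 * s) ->
  measurable_fun setT a -> (forall x, 0 < a x) ->
  (ess_supN a < +oo)%E ->
  in_Hminus_s s f -> nonneg_functional s f ->
  (exists u, in_Hs s u /\ f u != 0) ->
  (0 < hyp_inf s p a f)%E ->
  (c0 s p a f < c1 s p a f)%E.
Proof.
move=> s0 s1 sN p1 pcrit ma apos esup fH fnn [w [w_in fw0]] hyp.
have N0 : (0 < N)%N.
  have : (0 : R) < N%:R by apply: lt_trans sN; rewrite mulr_gt0.
  by rewrite ltr0n.
have a0 x : 0 <= a x by exact: ltW.
have p0 : 0 < p by lra.
case: fH => fadd fsc [C0 hC0].
pose C := `|C0|.
have C0' : 0 <= C by exact: normr_ge0.
have hC u : in_Hs s u -> `|f u| <= C * Num.sqrt (Hs_norm2 s u).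
  move=> uH; apply: le_trans (hC0 u uH) _.
  by apply: ler_wpM2r; [exact: sqrtr_ge0 | exact: ler_norm].
pose L := Linfty_norm a.
have Isc u c : in_Hs s u -> 0 < c ->
  I_af s p a f (fun x => c * u x) =
  2^-1 * (c ^+ 2 * Hs_norm2 s u) - (p + 1)^-1 * (c `^ (p + 1) * Jf p a u) - c * f u.
  by move=> uH c0; rewrite I_afE (Q_scale N0) ?gt_eqF // (J_scale N0) // fsc.
have gsc u c : 0 < c ->
  g_fun s p a (fun x => c * u x) =
  c ^+ 2 * Hs_norm2 s u - p * L * (c `^ (p + 1) * Lq_pow (p + 1) u).
  by move=> c0; rewrite g_funE (Q_scale N0) ?gt_eqF // (P_scale N0) ?gt_eqF // gtr0_norm.
have [w' [w'H fw'0]] : exists w', in_Hs s w' /\ 0 < f w'.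
  have [fpos|fneg] := ltP 0 (f w); first by exists w.
  exists (fun x => -1 * w x); split.
    by apply: (inHs_scale N0) => //; rewrite oppr_eq0 oner_eq0.
  by rewrite fsc // mulN1r oppr_gt0 lt_neqAle fneg andbT.
pose Qw := Hs_norm2 s w'. pose Fw := f w'. pose Pw := Lq_pow (p + 1) w'.
have Qw0 : 0 < Qw.
  rewrite lt_neqAle (Q_ge0 N0) andbT; apply/negP => /eqP Q0.
  have := hC w' w'H; rewrite -/Qw -Q0 sqrtr0 mulr0 normr_le0 => /eqP F0.
  by move: fw'0; rewrite F0 ltxx.
pose M := p * `|L| * Pw.
have Pw0 : 0 <= Pw by exact: (P_ge0 N0).
have M0 : 0 <= M by rewrite mulr_ge0 ?mulr_ge0 // ltW.
pose x0 := Qw / (2 * M + 1).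
have x00 : 0 < x0 by rewrite divr_gt0 //; lra.
pose tau := Num.min 1 (Num.min (Fw / Qw) (x0 `^ (p - 1)^-1)).
have tau0 : 0 < tau by rewrite /tau !lt_min ltr01 divr_gt0 // powR_gt0.
have tau1 : tau <= 1 by rewrite /tau ge_min lexx.
have tauF : tau * Qw <= Fw.
  have : tau <= Fw / Qw by rewrite /tau !ge_min lexx orbT.
  by rewrite ler_pdivlMr.
have taux : tau `^ (p - 1) <= x0.
  have h : tau <= x0 `^ (p - 1)^-1 by rewrite /tau !ge_min lexx !orbT.
  rewrite -[X in _ <= X](powRK' x0 (p - 1)) ?(ltW x00) ?subr_eq0 ?gt_eqF//.
  by apply: ge0_ler_powR; rewrite ?nnegrE ?powR_ge0 //; lra.
pose v0 := fun x => tau * w' x.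
have v0H : in_Hs s v0 by apply: (inHs_scale N0) => //; rewrite gt_eqF.
pose eta := tau * Fw / 2.
have eta0 : 0 < eta by rewrite divr_gt0 // mulr_gt0.
have v0U1 : U1 s p a v0.
  split => //; right; rewrite gsc // powR_split // -/Qw -/Pw.
  have tp0 : 0 <= tau `^ (p - 1) by exact: powR_ge0.
  have h1 : p * L * Pw <= M by rewrite /M -mulrA -[X in _ <= X]mulrA ler_wpM2l ?ler_wpM2r ?real_ler_norm ?num_real // ltW.
  have h2 : M * x0 < Qw.
    rewrite /x0 mulrA ltr_pdivrMr; last lra.
    nra.
  have h3 : p * L * Pw * tau `^ (p - 1) <= M * x0.
    apply: le_trans (_ : M * tau `^ (p - 1) <= _).
      exact: ler_wpM2r.
    exact: ler_wpM2l.
  have t2 : 0 < tau ^+ 2 by rewrite exprn_gt0.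
  nra.
have Iv0 : I_af s p a f v0 <= - eta.
  rewrite Isc // -/Qw -/Fw.
  have J0 := J_ge0 N0 p a w' a0.
  have tp0 : 0 <= tau `^ (p + 1) by exact: powR_ge0.
  have pi0 : 0 < (p + 1)^-1 by rewrite invr_gt0; lra.
  have : 0 <= (p + 1)^-1 * (tau `^ (p + 1) * Jf p a w') by rewrite mulr_ge0 ?mulr_ge0 // ltW.
  rewrite /eta; nra.
have c0le : (c0 s p a f <= (- eta)%:E)%E.
  have : (c0 s p a f <= (I_af s p a f v0)%:E)%E by apply: ereal_inf_lbound; exists v0.
  by move/le_trans; apply; rewrite lee_fin.
have [L0|L0] := leP L 0.
  have -> : c1 s p a f = +oo%E.
    rewrite /c1; set S := [set _ | _ in _].
    have -> : S = set0; last exact: ereal_inf0.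
    apply/seteqP; split => // y [u [uH Qn gu] _].
    move: gu; rewrite g_funE => /eqP; rewrite subr_eq0 => /eqP gu.
    have := Q_ge0 N0 s u; have := P_ge0 N0 (p + 1) u.
    move: Qn; rewrite gu -/L => Qn P0 Q0.
    have : p * L * Lq_pow (p + 1) u <= 0.
      by rewrite mulr_le0_ge0 // mulr_ge0_le0 // ltW.
    move=> H; move: Qn; have -> : p * L * Lq_pow (p + 1) u = 0 by apply/eqP; rewrite eq_le H Q0.
    by rewrite eqxx.
  by apply: le_lt_trans c0le _; rewrite ltry.
have esL : ess_supN a = L%:E.
  move: esup L0; rewrite /L /Linfty_norm.
  by case: (ess_supN a) => [r| |] //=; rewrite ltxx.
have [dl dl0 hdl] : exists2 dl : R, 0 < dl & forall v, in_Hs s v ->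
    Lq_pow (p + 1) v = 1 -> dl <= Cp p a * Hs_norm2 s v `^ (p / (p - 1)) - f v.
  move: hyp; rewrite /hyp_inf.
  set S := [set _ | _ in _].
  case E : (ereal_inf S) => [r| |] // r0.
    exists r => // v vH vP; rewrite -lee_fin -E; apply: ereal_inf_lbound.
    by exists v.
  exists 1 => // v vH vP.
  have : (ereal_inf S <= (Cp p a * Hs_norm2 s v `^ (p / (p - 1)) - f v)%:E)%E.
    by apply: ereal_inf_lbound; exists v.
  by rewrite E leNgt ltry.
pose A := p * L.
have A0 : 0 < A by rewrite mulr_gt0.
pose ipq := (p * (p + 1))^-1.
have ipq0 : 0 < ipq by rewrite invr_gt0 mulr_gt0 //; lra.
have ipqE : ipq * (p * (p + 1)) = 1 by rewrite mulVf // gt_eqF // mulr_gt0 //; lra.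
have ipq2 : ipq < 2^-1 by nra.
pose kap := 2^-1 - ipq.
have kap0 : 0 < kap by rewrite /kap; lra.
pose Qm := (C / kap) ^+ 2.
have Qm0 : 0 <= Qm by exact: sqr_ge0.
pose eps2 := dl ^+ 2 / (12 * A * (1 + Qm / A)).
have eps20 : 0 < eps2.
  have h : 0 <= Qm / A by rewrite divr_ge0 // ltW.
  rewrite /eps2 divr_gt0 ?exprn_gt0 //; apply: mulr_gt0; [apply: mulr_gt0 => //; lra | lra].
pose eps := Num.min (eta / 2) eps2.
have eps0 : 0 < eps by rewrite /eps lt_min eps20 andbT; lra.
have epseta : eps <= eta / 2 by rewrite /eps ge_min lexx.
have epse2 : eps <= eps2 by rewrite /eps ge_min lexx orbT.
pose Mlow := C ^+ 2 / kap.
have claim u : U0 s p a u ->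
    ((c0 s p a f + eps%:E)%E <= (I_af s p a f u)%:E)%E /\ - Mlow <= I_af s p a f u.
  case=> uH Qn gu.
  pose Q := Hs_norm2 s u. pose P := Lq_pow (p + 1) u. pose J := Jf p a u. pose F := f u.
  have Q0 : 0 < Q by rewrite lt_neqAle eq_sym Qn (Q_ge0 N0).
  have QP : Q = A * P.
    by move: gu; rewrite g_funE => /eqP; rewrite subr_eq0 => /eqP.
  have P0 : 0 < P by move: Q0; rewrite QP pmulr_rgt0.
  have J0 : 0 <= J by exact: (J_ge0 N0).
  have JL : J <= L * P by apply: (J_le N0) => //; lra.
  have JQ : J * p <= Q by rewrite QP /A; nra.
  have FC : F <= C * Num.sqrt Q by apply: le_trans (ler_norm _) (hC u uH).
  have IE : I_af s p a f u = 2^-1 * Q - (p + 1)^-1 * J - F by [].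
  have Jq : (p + 1)^-1 * J <= ipq * Q.
    have Jp : J <= p^-1 * Q.
      by rewrite -(ler_pM2r p0) mulrAC mulVf ?gt_eqF // mul1r.
    have -> : ipq * Q = (p + 1)^-1 * (p^-1 * Q) by rewrite /ipq invfM; ring.
    by apply: ler_wpM2l => //; rewrite invr_ge0; lra.
  have Ilow : kap * Q - C * Num.sqrt Q <= I_af s p a f u.
    by rewrite IE /kap; lra.
  have sQ0 : 0 <= Num.sqrt Q by exact: sqrtr_ge0.
  have sQ2 : Num.sqrt Q * Num.sqrt Q = Q by rewrite -expr2 sqr_sqrtr ?(ltW Q0).
  split.
    pose t := P `^ (p + 1)^-1.
    have t0 : 0 < t by rewrite powR_gt0.
    have pp1 : p + 1 != 0 by rewrite gt_eqF //; lra.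
    have tP : t `^ (p + 1) = P by rewrite (powRK' P (p + 1) (ltW P0) pp1).
    have ti0 : t^-1 != 0 by rewrite invr_eq0 gt_eqF.
    pose v := fun x => t^-1 * u x.
    have vH : in_Hs s v by exact: (inHs_scale N0).
    have vP : Lq_pow (p + 1) v = 1.
      rewrite (P_scale N0 (p + 1) u _ ti0) -/P (gtr0_norm (_ : 0 < t^-1)); last by rewrite invr_gt0.
      rewrite -tP -powRM; last exact: ltW t0.
        by rewrite mulVf ?(gt_eqF t0) // powR1.
      by rewrite invr_ge0 ltW.
    have hv := hdl v vH vP.
    rewrite (Q_scale N0 s u _ ti0) (fsc _ _ uH) -/Q -/F in hv.
    have Fb : t * dl <= (p - 1) / p * Q - F.
      have H := ler_wpM2l (ltW t0) hv.
      rewrite mulrBr (mulrA t t^-1 F) (mulfV (lt0r_neq0 t0)) mul1r QP -tP /Cp -/L -/A (compCp A t p A0 t0 p1) in H.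
      by rewrite QP -tP.
    have [Ige|Ilt] := leP 0 (I_af s p a f u).
      apply: le_trans (leeD c0le (lexx _)) _.
      rewrite -EFinD lee_fin; move: epseta Ige eta0; clear; lra.
    have r0 : 0 < Num.sqrt Q by rewrite sqrtr_gt0.
    have kr : kap * Num.sqrt Q < C.
      have H : kap * Num.sqrt Q * Num.sqrt Q < C * Num.sqrt Q.
        rewrite -mulrA sQ2; move: Ilow Ilt; clear; lra.
      by rewrite ltr_pM2r in H.
    have QQm : Q < Qm.
      have rz : Num.sqrt Q < C / kap by rewrite ltr_pdivlMr // mulrC.
      rewrite -sQ2 /Qm expr2; move: rz sQ0; clear; nra.
    have Fb2 : F <= Q - t * dl.
      have : (p - 1) / p * Q <= Q.
        rewrite -[X in _ <= X]mul1r ler_wpM2r ?(ltW Q0) // ler_pdivrMr // mul1r; lra.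
      move: Fb; clear; lra.
    have kE : kap * Q = 2^-1 * Q - ipq * Q by rewrite /kap mulrBl.
    have kQ : 0 <= kap * Q by rewrite mulr_ge0 // ltW.
    have tQ : t * dl < Q by move: IE Jq kE kQ Fb2 Ilt; clear; lra.
    pose sg := t * dl / (6 * Q).
    have sg0 : 0 < sg by rewrite /sg divr_gt0 ?mulr_gt0.
    have sg1 : sg < 1.
      rewrite /sg ltr_pdivrMr ?mulr_gt0 // mul1r; move: tQ Q0; clear; lra.
    have ta0 : 0 < 1 - sg by move: sg1; clear; lra.
    have ta1 : 1 - sg < 1 by move: sg0; clear; lra.
    pose v1 := fun x => (1 - sg) * u x.
    have v1H : in_Hs s v1 by apply: (inHs_scale N0 s u _ (lt0r_neq0 ta0) uH).
    have K0 : 0 < t `^ (p - 1) by rewrite powR_gt0.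
    have Y1 : (1 - sg) `^ (p - 1) < 1.
      have := @gt0_ltr_powR R (p - 1) _ (1 - sg) 1 _ _ ta1.
      rewrite powR1; apply; rewrite ?nnegrE; lra.
    have Y0 : 0 <= (1 - sg) `^ (p - 1) by exact: powR_ge0.
    have Z20 : 0 < (1 - sg) ^+ 2 by rewrite exprn_gt0.
    have v1U1 : U1 s p a v1.
      split => //; right; rewrite (gsc u (1 - sg) ta0) -/Q -/P (powR_split (1 - sg) p ta0).
      rewrite (_ : p * L * ((1 - sg) `^ (p - 1) * (1 - sg) ^+ 2 * P) =
          (1 - sg) ^+ 2 * (1 - sg) `^ (p - 1) * (p * L * P)); last by ring.
      rewrite -/A -QP.
      have : 0 < (1 - sg) ^+ 2 * Q * (1 - (1 - sg) `^ (p - 1)).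
        by rewrite mulr_gt0 ?mulr_gt0 // subr_gt0.
      move: ((1 - sg) ^+ 2) => z2; move: ((1 - sg) `^ (p - 1)) => y.
      clear; nra.
    have c0v1 : (c0 s p a f <= (I_af s p a f v1)%:E)%E.
      by apply: ereal_inf_lbound; exists v1.
    rewrite (Isc u (1 - sg) uH ta0) -/Q -/J -/F in c0v1.
    have X1 : (1 - sg) `^ (p + 1) <= 1.
      rewrite (powR_split (1 - sg) p ta0).
      have : (1 - sg) ^+ 2 <= 1 by rewrite expr_le1 // ltW.
      move: Y1 Y0 Z20; clear; nra.
    have brn := bern (1 - sg) (p + 1) ta0 (addr_ge0 (ltW p0) ler01).
    rewrite (_ : 1 - (1 - sg) = sg) in brn; last by ring.
    have QK : Q = A * t `^ (p - 1) * t ^+ 2 by rewrite QP -tP powR_split // mulrA.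
    have Kb : t `^ (p - 1) <= 1 + Qm / A.
      have := pow_m1_le t p t0 p1; rewrite tP.
      have : P < Qm / A by rewrite ltr_pdivlMr // mulrC -QP.
      clear; lra.
    have Fb' : F <= (p - 1) / p * Q - t * dl by move: Fb; clear; lra.
    have br := branch_real p Q J F t dl A Qm ((1 - sg) `^ (p + 1)) (t `^ (p - 1))
       p1 Q0 J0 JQ t0 dl0 A0 tQ Fb' brn X1 QK Kb Qm0 K0.
    apply: le_trans (leeD c0v1 (lexx _)) _; rewrite -EFinD lee_fin IE.
    move: br epse2; rewrite -/sg -/eps2; clear; lra.
  rewrite /Mlow; apply: le_trans Ilow.
  have Cz : C = kap * (C / kap) by rewrite mulrC divfK // gt_eqF.
  have -> : C ^+ 2 / kap = kap * (C / kap) * (C / kap).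
    by rewrite {1}Cz; field; rewrite gt_eqF.
  have z0 : 0 <= C / kap by rewrite divr_ge0 // ltW.
  move: (C / kap) z0 Cz => z z0 ->.
  rewrite (_ : kap * Q = kap * (Num.sqrt Q * Num.sqrt Q)); last by rewrite sQ2.
  have : 0 <= (Num.sqrt Q - z) ^+ 2 + Num.sqrt Q * z by rewrite addr_ge0 ?sqr_ge0 ?mulr_ge0.
  move=> H; have := ler_wpM2l (ltW kap0) H; rewrite mulr0.
  move: (Num.sqrt Q) => r H2; nra.
have c1ge : ((c0 s p a f + eps%:E)%E <= c1 s p a f)%E.
  by apply: le_ereal_inf_tmp => _ [u uU <-]; exact: (claim u uU).1.
have c1low : ((- Mlow)%:E <= c1 s p a f)%E.
  by apply: le_ereal_inf_tmp => _ [u uU <-]; rewrite lee_fin; exact: (claim u uU).2.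
move: c0le c1ge c1low; case: (c0 s p a f) => [r| |] //.
  move=> _ H _; apply: lt_le_trans H; by rewrite -EFinD lte_fin ltrDl.
by move=> _ _ H; apply: lt_le_trans H; exact: ltNyr.
Qed.
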